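(* Let $G=(N,\Sigma,R,S)$ be a linear context-free grammar and fix any total order on $R$. Then $\Phi_3(G)$ is a test set for $L(G)$, and for every $k\ge 0$ the set $\Phi_k(G)$ contains at most $\sum_{i=0}^k |R|^i$ words.
   Context: A context-free grammar is $G=(N,\Sigma,R,S)$ with non-terminals $N$, terminals $\Sigma$, productions $R\subseteq N\times(N\uplus\Sigma)^*$, start symbol $S$; $L(G)$ is its language. $G$ is linear if every right-hand side has at most one non-terminal occurrence. A morphism $f:\Sigma^*\to\Gamma^*$ satisfies $f(\epsilon)=\epsilon$, $f(uv)=f(u)f(v)$. $T\subseteq L$ is a test set for $L$ if for every alphabet $\Gamma$ and morphisms $f,g:\Sigma^*\to\Gamma^*$ agreeing on all words of $T$, $f$ and $g$ agree on all words of $L$. Graph of $G$: vertices $N\uplus\{\bot\}$; for each rule $r = A\to uBv$ with $B\in N$, $u,v\in\Sigma^*$ there is an edge $(A,r,B)$ with $\overleftarrow{r}=u$, $\overrightarrow{r}=v$; for each rule $r=A\to u$ with $u\in\Sigma^*$ there is an edge $(A,r,\bot)$ with $\overleftarrow{r}=u$, $\overrightarrow{r}=\epsilon$. A path is a sequence of consecutive edges $(A_1,r_1,A_2)(A_2,r_2,A_3)\cdots(A_n,r_n,A_{n+1})$ (the empty path from a vertex to itself is allowed); it is accepting if $A_1=S$ and $A_{n+1}=\bot$, and then it corresponds to the word $\overleftarrow{r_1}\cdots\overleftarrow{r_n}\,\overrightarrow{r_n}\cdots\overrightarrow{r_1}\in L(G)$. Paths are identified with their rule sequences in $R^*$ and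 ordered by: $P_1<P_2$ iff $|P_1|<|P_2|$, or $|P_1|=|P_2|$ and $P_1$ is lexicographically smaller w.r.t. the fixed total order on $R$. A path is optimal if it is the $<$-minimal path among all paths from its first vertex to its last vertex. $\Phi_k(G)$ is the set of words corresponding to accepting paths of the form $P_1e_1P_2e_2\cdots P_ne_nP_{n+1}$ with $n\le k$, each $e_i$ a single edge, each $P_i$ ($1\le i\le n+1$) optimal, and each $P_ie_i$ ($1\le i\le n$) not optimal. *)

(* Defs.v *)
From mathcomp Require Import all_boot.
Set Implicit Arguments. Unset Strict Implicit. Unset Printing Implicit Defensive.

Section LinearGrammar.
Variables (N Sigma : eqType).

(* A production of a linear grammar: (A, inl (u, B, v)) is A -> u B v,
   (A, inr u) is A -> u  (u, v terminal words, B a non-terminal). *)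
Definition rule := (N * ((seq Sigma * N * seq Sigma) + seq Sigma))%type.

Definition lhs (r : rule) : N := r.1.
(* target vertex in the graph; None stands for the sink vertex bot *)
Definition tgt (r : rule) : option N :=
  match r.2 with inl (_, B, _) => Some B | inr _ => None end.
Definition lword (r : rule) : seq Sigma :=
  match r.2 with inl (u, _, _) => u | inr u => u end.
Definition rword (r : rule) : seq Sigma :=
  match r.2 with inl (_, _, v) => v | inr _ => [::] end.

Variable rules : seq rule.   (* the set R, listed in the fixed total order *)
Variable S : N.

Inductive derives : N -> seq Sigma -> Prop :=
| der_term A u : (A, inr u) \in rules -> derives A u
| der_nt A u B v w : (A, inl (u, B, v)) \in rules -> derives B w ->
    derives A (u ++ w ++ v).

Definition lang (w : seq Sigma) : Prop := derives S w.

Fixpoint is_path (x : option N) (p : seq rule) (y : option N) : bool :=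
  match p with
  | [::] => x == y
  | r :: p' => [&& r \in rules, x == Some (lhs r) & is_path (tgt r) p' y]
  end.

Definition path_word (p : seq rule) : seq Sigma :=
  flatten (map lword p) ++ flatten (rev (map rword p)).

Fixpoint lexlt (s t : seq nat) : bool :=
  match s, t with
  | a :: s', b :: t' => (a < b) || ((a == b) && lexlt s' t')
  | _, _ => false
  end.

Definition path_lt (p q : seq rule) : bool :=
  (size p < size q) ||
  ((size p == size q) &&
   lexlt (map (index^~ rules) p) (map (index^~ rules) q)).

Definition optimal (p : seq rule) : Prop :=
  exists x y, is_path x p y /\ forall q, is_path x q y -> ~~ path_lt q p.

(* decomp n p : p = P1 e1 P2 e2 ... Pm em P(m+1) with m <= n, each Pi optimal
   and each Pi ei not optimal *)
Inductive decomp : nat -> seq rule -> Prop :=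
| decomp_last n P : optimal P -> decomp n P
| decomp_cons n P e Q : optimal P -> ~ optimal (rcons P e) -> decomp n Q ->
    decomp n.+1 (P ++ e :: Q).

Definition Phi (k : nat) (w : seq Sigma) : Prop :=
  exists p, [/\ is_path (Some S) p None, decomp k p & path_word p = w].

End LinearGrammar.

Definition morph (Sigma Gamma : Type) (h : Sigma -> seq Gamma) (w : seq Sigma)
  : seq Gamma := flatten (map h w).

Definition test_set (Sigma : Type) (L T : seq Sigma -> Prop) : Prop :=
  (forall w, T w -> L w) /\
  forall (Gamma : finType) (f g : Sigma -> seq Gamma),
    (forall w, T w -> morph f w = morph g w) ->
    forall w, L w -> morph f w = morph g w.

(* Main.v *)
From Stdlib Require Import Classical ZArith Lia.
Require Import Defs.
From mathcomp Require Import all_boot.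
Set Implicit Arguments. Unset Strict Implicit. Unset Printing Implicit Defensive.


Record grp := Grp {
  gT :> Type; gmul : gT -> gT -> gT; gone : gT; ginv : gT -> gT;
  gmulA : forall x y z, gmul x (gmul y z) = gmul (gmul x y) z;
  gmul1l : forall x, gmul gone x = x;
  gmul1r : forall x, gmul x gone = x;
  gmulVl : forall x, gmul (ginv x) x = gone;
  gmulVr : forall x, gmul x (ginv x) = gone }.

Declare Scope grp_scope.
Delimit Scope grp_scope with G.
Local Notation "x * y" := (gmul x y) : grp_scope.
Local Notation "1" := (gone _) : grp_scope.
Local Notation "x ^-1" := (ginv x) : grp_scope.
Local Open Scope grp_scope.
Ltac show := match goal with |- ?g => idtac g end.

Lemma gKl (G : grp) (x y : G) : x^-1 * (x * y) = y.
Proof. by rewrite gmulA gmulVl gmul1l. Qed.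
Lemma gKr (G : grp) (x y : G) : (y * x) * x^-1 = y.
Proof. by rewrite -gmulA gmulVr gmul1r. Qed.
Lemma gKl' (G : grp) (x y : G) : x * (x^-1 * y) = y.
Proof. by rewrite gmulA gmulVr gmul1l. Qed.
Lemma gKr' (G : grp) (x y : G) : (y * x^-1) * x = y.
Proof. by rewrite -gmulA gmulVl gmul1r. Qed.
Lemma gcanl (G : grp) (x y z : G) : x * y = x * z -> y = z.
Proof. by move=> h; rewrite -(gKl x y) h gKl. Qed.
Lemma gcanr (G : grp) (x y z : G) : y * x = z * x -> y = z.
Proof. by move=> h; rewrite -(gKr x y) h gKr. Qed.
Lemma ginvM (G : grp) (x y : G) : (x * y)^-1 = y^-1 * x^-1.
Proof.
apply: (@gcanl _ (x * y)); rewrite gmulVr -gmulA (gmulA y) gmulVr gmul1l gmulVr //.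
Qed.
Lemma ginvK (G : grp) (x : G) : (x^-1)^-1 = x.
Proof. by apply: (@gcanl _ x^-1); rewrite gmulVr gmulVl. Qed.

Ltac gnorm := repeat (rewrite -?gmulA; first [rewrite gKl | rewrite gKl' | rewrite gmulVr | rewrite gmulVl | rewrite gmul1l | rewrite gmul1r ]); rewrite -?gmulA.

Lemma comm_inv (G : grp) (x d : G) : x * d = d * x -> x^-1 * d = d * x^-1.
Proof. move=> h; apply: (@gcanl _ x); rewrite gKl' gmulA h gKr //. Qed.
Lemma comm_mul (G : grp) (x y d : G) : x * d = d * x -> y * d = d * y -> (x * y) * d = d * (x * y).
Proof. by move=> hx hy; rewrite -gmulA hy gmulA hx gmulA. Qed.

Lemma sandw (G : grp) (a z b w : G) : a * z * b = w -> b = z^-1 * a^-1 * w.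
Proof. by move=> <-; rewrite -!gmulA gKl gKl. Qed.

Lemma core (G : grp)
  (CT : forall x y z : G, y <> 1 -> x * y = y * x -> y * z = z * y -> x * z = z * x)
  (a b Z W : bool -> bool -> G) :
 (forall c1 c2 c3 c4, ~~ [&& c1, c2, c3 & c4] -> a c1 c2 * Z c3 c4 * b c1 c2 = W c3 c4) ->
 (a false false = a true false -> a false true = a true true) ->
 (b false false = b true false -> b false true = b true true) ->
 (Z false false = Z false true -> Z true false = Z true true) ->
 a true true * Z true true * b true true = W true true.
Proof.
move=> E Sa Sb SZ.
have E00 : forall c3 c4, a false false * Z c3 c4 * b false false = W c3 c4 by move=> *; apply: E.
have case1 : a false false = a false true -> a false false = a true false ->
   a true true * Z true true * b true true = W true true.
  move=> h1 h2.
  have hb : forall c1 c2, ~~ (c1 && c2) -> b c1 c2 = b false false.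
    move=> c1 c2 nc.
    rewrite (sandw (E c1 c2 false false _)); last by case: c1 c2 nc => [] [].
    rewrite (sandw (E false false false false _)) //.
    by case: c1 c2 nc => [] [] //= _; rewrite -?h1 -?h2.
  have a11 : a true true = a false false by rewrite -Sa // h1.
  have b11 : b true true = b false false.
    by rewrite -Sb ?hb //.
  by rewrite a11 b11 E00.
have case2 : Z false false = Z false true -> Z false false = Z true false ->
   a true true * Z true true * b true true = W true true.
  move=> h1 h2.
  have z11 : Z true true = Z false false by rewrite -SZ // h2.
  have w11 : W true true = W true false by rewrite -!E00 z11 h2.
  by rewrite z11 w11 h2 E.
have gen : forall k1 k2 k1' k2' j1 j2 j1' j2',
   ~~ (k1 && k2) -> ~~ (k1' && k2') -> ~~ (j1 && j2) -> ~~ (j1' && j2') ->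
   a k1 k2 <> a k1' k2' -> Z j1 j2 <> Z j1' j2' ->
   a true true * Z true true * b true true = W true true.
  move=> k1 k2 k1' k2' j1 j2 j1' j2' nk nk' nj nj' na nz.
  set ga := (a k1' k2')^-1 * a k1 k2.
  set de := Z j1 j2 * (Z j1' j2')^-1.
  have ga1 : ga <> 1.
    move=> h; apply: na; rewrite -(gKl' (a k1' k2') (a k1 k2)) -/ga h gmul1r //.
  have de1 : de <> 1.
    move=> h; apply: nz; rewrite -(gKr' (Z j1' j2') (Z j1 j2)) -/de h gmul1l //.
  have Eb : forall k1 k2 i1 i2, ~~ (k1 && k2) -> b k1 k2 = (Z i1 i2)^-1 * (a k1 k2)^-1 * W i1 i2.
    move=> c1 c2 i1 i2 nc; apply: sandw; apply: E; by case: c1 c2 nc => [] [].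
  have comD : forall i1 i2, ga * (Z i1 i2 * (Z false false)^-1) = (Z i1 i2 * (Z false false)^-1) * ga.
    move=> i1 i2.
    have key : forall l1 l2, ga * Z l1 l2 = Z l1 l2 * (b k1' k2' * (b k1 k2)^-1).
      move=> l1 l2; rewrite /ga (Eb k1' k2' l1 l2 nk') (Eb k1 k2 l1 l2 nk) ginvM ginvM ginvK ginvK.
      by gnorm.
    have gaE : ga = Z false false * (b k1' k2' * (b k1 k2)^-1) * (Z false false)^-1.
      by rewrite -key gKr.
    rewrite gmulA key gaE; by gnorm.
  have Wc : forall c1 c2 i1 i2, ~~ (i1 && i2) -> a c1 c2 * Z i1 i2 * b c1 c2 = W i1 i2.
    move=> c1 c2 i1 i2 nc; apply: E; by case: c1 c2 i1 i2 nc => [] [] [] [].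
  have conj : forall c1 c2, a c1 c2 * de * (a c1 c2)^-1 = W j1 j2 * (W j1' j2')^-1.
    move=> c1 c2; rewrite -(Wc c1 c2 _ _ nj) -(Wc c1 c2 _ _ nj') !ginvM /de; by gnorm.
  have comC : forall c1 c2, ((a false false)^-1 * a c1 c2) * de = de * ((a false false)^-1 * a c1 c2).
    move=> c1 c2.
    have h := conj c1 c2; rewrite -(conj false false) in h.
    have e : ((a false false)^-1 * a c1 c2) * de * ((a false false)^-1 * a c1 c2)^-1 = de.
      rewrite ginvM ginvK.
      have -> : (a false false)^-1 * a c1 c2 * de * ((a c1 c2)^-1 * a false false)
         = (a false false)^-1 * (a c1 c2 * de * (a c1 c2)^-1) * a false false by gnorm.
      rewrite h; by gnorm.
    by rewrite -{2}e gKr'.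
  have gade : ga * de = de * ga.
    have -> : ga = ((a false false)^-1 * a k1' k2')^-1 * ((a false false)^-1 * a k1 k2).
      by rewrite ginvM ginvK; gnorm.
    apply: comm_mul; [apply: comm_inv|]; apply: comC.
  set C := (a false false)^-1 * a true true.
  set D := Z true true * (Z false false)^-1.
  have CD : C * D = D * C.
    apply: (CT _ ga) => //; last by rewrite comD.
    apply: (CT _ de) => //; first exact: comC.
  have a11 : a true true = a false false * C by rewrite /C gKl'.
  have z11 : Z true true = D * Z false false by rewrite /D gKr'.
  have b11 : b true true = (Z false false)^-1 * C^-1 * Z false false * b false false.
    rewrite (sandw (E true true false false isT)) -(E00 false false) /C ginvM ginvK.
    by gnorm.
  rewrite a11 z11 b11.
  have -> : a false false * C * (D * Z false false) * ((Z false false)^-1 * C^-1 * Z false false * b false false)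
        = a false false * (C * D * C^-1) * Z false false * b false false by gnorm.
  by rewrite CD gKr -(gmulA (a false false) D) -z11 E00.
have nz : ~ (Z false false = Z false true /\ Z false false = Z true false) ->
   exists j1 j2, ~~ (j1 && j2) /\ Z false false <> Z j1 j2.
  move=> h; case: (classic (Z false false = Z false true)) => h1.
    exists true, false; split => // h2; by apply: h.
  by exists false, true.
have na : ~ (a false false = a false true /\ a false false = a true false) ->
   exists j1 j2, ~~ (j1 && j2) /\ a false false <> a j1 j2.
  move=> h; case: (classic (a false false = a false true)) => h1.
    exists true, false; split => // h2; by apply: h.
  by exists false, true.
case: (classic (a false false = a false true /\ a false false = a true false)) => [[h1 h2]|ha].
  exact: case1.
case: (classic (Z false false = Z false true /\ Z false false = Z true false)) => [[h1 h2]|hz].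
  exact: case2.
have [k1 [k2 [nk hk]]] := na ha.
have [j1 [j2 [nj hj]]] := nz hz.
exact: (gen false false k1 k2 false false j1 j2).
Qed.

Local Close Scope grp_scope.


Record mat := Mat { e11 : Z; e12 : Z; e21 : Z; e22 : Z }.
Definition mmul (x y : mat) : mat :=
  Mat (e11 x * e11 y + e12 x * e21 y)%Z (e11 x * e12 y + e12 x * e22 y)%Z
      (e21 x * e11 y + e22 x * e21 y)%Z (e21 x * e12 y + e22 x * e22 y)%Z.
Definition mone := Mat 1 0 0 1.
Definition minv (x : mat) := Mat (e22 x) (- e12 x) (- e21 x) (e11 x).
Definition mdet (x : mat) := (e11 x * e22 x - e12 x * e21 x)%Z.
Definition goodb (x : mat) : bool :=
  [&& (mdet x =? 1)%Z, (e11 x mod 4 =? 1)%Z, (e22 x mod 4 =? 1)%Z,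
      (e12 x mod 2 =? 0)%Z & (e21 x mod 2 =? 0)%Z].

Ltac msimpl := cbn [e11 e12 e21 e22 mmul mone minv mdet].
Lemma goodP x : goodb x <-> [/\ mdet x = 1%Z, (e11 x mod 4 = 1)%Z, (e22 x mod 4 = 1)%Z,
      (e12 x mod 2 = 0)%Z & (e21 x mod 2 = 0)%Z].
Proof.
rewrite /goodb; split.
  by case/and5P => /Z.eqb_spec ? /Z.eqb_spec ? /Z.eqb_spec ? /Z.eqb_spec ? /Z.eqb_spec ?.
by case=> h1 h2 h3 h4 h5; apply/and5P; split; apply/Z.eqb_spec.
Qed.

Lemma mat_eq (x y : mat) : e11 x = e11 y -> e12 x = e12 y -> e21 x = e21 y -> e22 x = e22 y -> x = y.
Proof. by case: x; case: y => /= ???? ???? -> -> -> ->. Qed.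

Lemma mmulA x y z : mmul x (mmul y z) = mmul (mmul x y) z.
Proof. apply: mat_eq; rewrite /=; ring. Qed.

Lemma mod4 x : (x mod 4 = 1)%Z -> exists k, x = (4 * k + 1)%Z.
Proof. move=> h; exists (x / 4)%Z; have := Z.div_mod x 4; lia. Qed.
Lemma mod2 x : (x mod 2 = 0)%Z -> exists k, x = (2 * k)%Z.
Proof. move=> h; exists (x / 2)%Z; have := Z.div_mod x 2; lia. Qed.

Lemma mdetM x y : mdet (mmul x y) = (mdet x * mdet y)%Z.
Proof. rewrite /mdet /=; ring. Qed.

Lemma mod_a x y u v : (x mod 4 = 1 -> y mod 4 = 1 -> u mod 2 = 0 -> v mod 2 = 0 ->
  (x * y + u * v) mod 4 = 1)%Z.
Proof.
move=> /mod4 [a ->] /mod4 [b ->] /mod2 [c ->] /mod2 [d ->].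
have -> : ((4 * a + 1) * (4 * b + 1) + 2 * c * (2 * d))%Z = (4 * (4*a*b + a + b + c * d) + 1)%Z by ring.
move: (4*a*b + a + b + c * d)%Z => t; Z.to_euclidean_division_equations; lia.
Qed.
Lemma mod_b x y u v : (u mod 2 = 0 -> v mod 2 = 0 -> (x * v + u * y) mod 2 = 0)%Z.
Proof.
move=> /mod2 [c ->] /mod2 [d ->].
have -> : (x * (2 * d) + 2 * c * y)%Z = (2 * (x * d + c * y))%Z by ring.
move: (x * d + c * y)%Z => t; Z.to_euclidean_division_equations; lia.
Qed.

Lemma good_mul x y : goodb x -> goodb y -> goodb (mmul x y).
Proof.
move=> gx gy; have hd : mdet (mmul x y) = 1%Z.
  by rewrite mdetM; move: gx gy => /goodP [-> _ _ _ _] /goodP [-> _ _ _ _].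
move: gx gy => /goodP [h1 h2 h3 h4 h5] /goodP [h1' h2' h3' h4' h5'].
apply/goodP; split => //=; try (apply: mod_b; assumption).
  exact: mod_a.
rewrite Z.add_comm; exact: mod_a.
rewrite Z.add_comm; apply: mod_b; assumption.
Qed.

Lemma good_inv x : goodb x -> goodb (minv x).
Proof.
case: x => a b c d /goodP [/= h1 h2 h3 h4 h5]; apply/goodP; rewrite /mdet /= in h1 *.
split; try (Z.to_euclidean_division_equations; lia).
Qed.
Lemma good_one : goodb mone. Proof. by []. Qed.

Lemma mmul1l x : mmul mone x = x.
Proof. case: x => a b c d; apply: mat_eq; msimpl; lia. Qed.
Lemma mmul1r x : mmul x mone = x.
Proof. case: x => a b c d; apply: mat_eq; msimpl; lia. Qed.
Lemma mmulVl x : mdet x = 1%Z -> mmul (minv x) x = mone.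
Proof. case: x => a b c d; rewrite /mdet /= => h; apply: mat_eq; msimpl; lia. Qed.
Lemma mmulVr x : mdet x = 1%Z -> mmul x (minv x) = mone.
Proof. case: x => a b c d; rewrite /mdet /= => h; apply: mat_eq; msimpl; lia. Qed.



Definition par (u1 u2 u3 v1 v2 v3 : Z) : Prop :=
  (u1 * v2 = u2 * v1 /\ u1 * v3 = u3 * v1 /\ u2 * v3 = u3 * v2)%Z.

Lemma mcomm x y : mmul x y = mmul y x <->
  par (e12 x) (e21 x) (e11 x - e22 x) (e12 y) (e21 y) (e11 y - e22 y).
Proof.
case: x => p q r s; case: y => a b c d; rewrite /par; msimpl; split.
  move=> h; have h1 := f_equal e11 h; have h2 := f_equal e12 h; have h3 := f_equal e21 h.
  move: h1 h2 h3; msimpl; lia.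
move=> [h1 [h2 h3]]; apply: mat_eq; msimpl; lia.
Qed.

Lemma piv vk ui uj uk vi vj wi wj wk : (vk <> 0 -> vk*ui = uk*vi -> vk*uj = uk*vj ->
  vk*wj = wk*vj -> vk*wi = wk*vi -> ui*wj = uj*wi)%Z.
Proof.
move=> h1 h2 h3 h4 h5.
have e : (vk*vk*(ui*wj - uj*wi) = (vk*ui - uk*vi)*(vk*wj) + uk*vi*(vk*wj - wk*vj)
   - (vk*uj - uk*vj)*(vk*wi) - uk*vj*(vk*wi - wk*vi))%Z by ring.
rewrite h2 h3 h4 h5 !Z.sub_diag !Z.mul_0_l !Z.mul_0_r !Z.sub_0_r Z.add_0_r in e.
have : (vk * vk <> 0)%Z by nia.
move=> h; apply/Z.sub_move_0_r; apply: (Z.mul_reg_l _ _ (vk*vk)) => //; rewrite e; ring.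
Qed.

Lemma par_trans u1 u2 u3 v1 v2 v3 w1 w2 w3 :
  (v1 <> 0 \/ v2 <> 0 \/ v3 <> 0)%Z ->
  par u1 u2 u3 v1 v2 v3 -> par v1 v2 v3 w1 w2 w3 -> par u1 u2 u3 w1 w2 w3.
Proof.
rewrite /par => hv [a1 [a2 a3]] [b1 [b2 b3]].
case: hv => [h|[h|h]].
- split; [apply: (piv (vk:=v1) (uk:=u1) (wk:=w1) (vi:=v1) (vj:=v2)) => //; nia|split; [apply: (piv (vk:=v1) (uk:=u1) (wk:=w1) (vi:=v1) (vj:=v3)) => //; nia|apply: (piv (vk:=v1) (uk:=u1) (wk:=w1) (vi:=v2) (vj:=v3)) => //; nia]].
- split; [apply: (piv (vk:=v2) (uk:=u2) (wk:=w2) (vi:=v1) (vj:=v2)) => //; nia|split; [apply: (piv (vk:=v2) (uk:=u2) (wk:=w2) (vi:=v1) (vj:=v3)) => //; nia|apply: (piv (vk:=v2) (uk:=u2) (wk:=w2) (vi:=v2) (vj:=v3)) => //; nia]].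
- split; [apply: (piv (vk:=v3) (uk:=u3) (wk:=w3) (vi:=v1) (vj:=v2)) => //; nia|split; [apply: (piv (vk:=v3) (uk:=u3) (wk:=w3) (vi:=v1) (vj:=v3)) => //; nia|apply: (piv (vk:=v3) (uk:=u3) (wk:=w3) (vi:=v2) (vj:=v3)) => //; nia]].
Qed.

Definition Hset := {x : mat | goodb x}.
Lemma hval_inj (x y : Hset) : proj1_sig x = proj1_sig y -> x = y.
Proof.
case: x => x hx; case: y => y hy /= e; subst y; congr exist; exact: bool_irrelevance.
Qed.
Definition hmul (x y : Hset) : Hset := @exist mat (fun m => goodb m) _ (good_mul (proj2_sig x) (proj2_sig y)).
Definition hone : Hset := @exist mat (fun m => goodb m) _ good_one.
Definition hinv (x : Hset) : Hset := @exist mat (fun m => goodb m) _ (good_inv (proj2_sig x)).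
Lemma hdet (x : Hset) : mdet (proj1_sig x) = 1%Z.
Proof. by case: x => x /= /goodP []. Qed.

Definition Hgrp : grp.
Proof.
refine (@Grp Hset hmul hone hinv _ _ _ _ _).
- by move=> x y z; apply: hval_inj; rewrite /= mmulA.
- by move=> x; apply: hval_inj; rewrite /= mmul1l.
- by move=> x; apply: hval_inj; rewrite /= mmul1r.
- by move=> x; apply: hval_inj; rewrite /= mmulVl // hdet.
- by move=> x; apply: hval_inj; rewrite /= mmulVr // hdet.
Defined.

Lemma nonscalar (y : Hset) : y <> hone ->
  (e12 (proj1_sig y) <> 0 \/ e21 (proj1_sig y) <> 0 \/ e11 (proj1_sig y) - e22 (proj1_sig y) <> 0)%Z.
Proof.
case: y => [[a b c d]] hy ne; rewrite /=.
have [h1 h2 h3 h4 h5] := (goodP _).1 hy; move: h1 h2 h3 h4 h5; rewrite /mdet; cbn [e11 e12 e21 e22] => h1 h2 h3 h4 h5.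
case: (Z.eq_dec b 0) => hb; last by left.
case: (Z.eq_dec c 0) => hc; last by right; left.
case: (Z.eq_dec (a - d) 0) => hd; last by right; right.
exfalso; apply: ne; apply: hval_inj => /=.
have ad : a = d by lia.
subst b c d.
have : (a = 1 \/ a = -1)%Z by nia.
case=> ha; subst a => //.
Qed.

Lemma Hct (x y z : Hgrp) : y <> gone Hgrp -> gmul x y = gmul y x -> gmul y z = gmul z y ->
  gmul x z = gmul z x.
Proof.
move=> ny hxy hyz.
have hxy' : mmul (proj1_sig x) (proj1_sig y) = mmul (proj1_sig y) (proj1_sig x)
  by have := f_equal (@proj1_sig _ _) hxy.
have hyz' : mmul (proj1_sig y) (proj1_sig z) = mmul (proj1_sig z) (proj1_sig y)
  by have := f_equal (@proj1_sig _ _) hyz.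
apply: hval_inj => /=; apply/mcomm.
apply: (par_trans (nonscalar ny)); first exact/mcomm.
exact/mcomm.
Qed.


Lemma hmul_val (x y : Hgrp) : proj1_sig (gmul x y) = mmul (proj1_sig x) (proj1_sig y).
Proof. by []. Qed.
Lemma goodA : goodb (Mat 1 2 0 1). Proof. by []. Qed.
Lemma goodB : goodb (Mat 1 0 2 1). Proof. by []. Qed.
Definition hgen (b : bool) : Hgrp :=
  if b then @exist mat (fun m => goodb m) _ goodA else @exist mat (fun m => goodb m) _ goodB.
Definition Psi (s : seq bool) : Hgrp := foldr (fun b acc => gmul (hgen b) acc) (gone Hgrp) s.

Lemma Psi_cons b s : Psi (b :: s) = gmul (hgen b) (Psi s). Proof. by []. Qed.
Lemma Psi_cat s t : Psi (s ++ t) = gmul (Psi s) (Psi t).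
Proof. elim: s => [|b s IH]; first exact: (esym (gmul1l _)). by rewrite cat_cons !Psi_cons IH gmulA. Qed.
Lemma Psi_rcons s x : Psi (rcons s x) = gmul (Psi s) (hgen x).
Proof. rewrite -cats1 Psi_cat; congr gmul; exact: gmul1r. Qed.

Definition nonneg (m : mat) := (0 <= e11 m /\ 0 <= e12 m /\ 0 <= e21 m /\ 0 <= e22 m)%Z.
Lemma Psi_nonneg s : nonneg (proj1_sig (Psi s)).
Proof.
elim: s => [|b s IH]; first by rewrite /nonneg /=; lia.
rewrite Psi_cons; change (nonneg (mmul (proj1_sig (hgen b)) (proj1_sig (Psi s)))).
move: IH; case: (proj1_sig (Psi s)) => p q r t; rewrite /nonneg; case: b;
  cbn [hgen proj1_sig e11 e12 e21 e22 mmul]; lia.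
Qed.

Definition kindA (m : mat) : bool := ((e11 m <=? e12 m) && (e21 m <=? e22 m))%Z.
Definition kindB (m : mat) : bool := ((e12 m <=? e11 m) && (e22 m <=? e21 m))%Z.

Lemma kind_rcons s x : kindA (proj1_sig (Psi (rcons s x))) = x /\ kindB (proj1_sig (Psi (rcons s x))) = ~~ x.
Proof.
rewrite Psi_rcons hmul_val; have := Psi_nonneg s; have := hdet (Psi s).
case: (proj1_sig (Psi s)) => p q r t; rewrite /nonneg /mdet /kindA /kindB.
case: x; cbn [hgen proj1_sig e11 e12 e21 e22 mmul] => hd hn.
  split; [apply/andP; split; apply/Z.leb_spec0; lia|].
  apply/negbTE/negP => /andP [/Z.leb_spec0 h1 /Z.leb_spec0 h2]; nia.
split; last by apply/andP; split; apply/Z.leb_spec0; lia.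
apply/negbTE/negP => /andP [/Z.leb_spec0 h1 /Z.leb_spec0 h2]; nia.
Qed.

Lemma Psi_inj s t : Psi s = Psi t -> s = t.
Proof.
elim/last_ind: s t => [|s x IH] t.
  case/lastP: t => [//|t y] e.
  have [h _] := kind_rcons t y; have [_ h'] := kind_rcons t y.
  by move: h h'; rewrite -e => h h'; move: h'; rewrite -h.
case/lastP: t => [|t y] e.
  have [h h'] := kind_rcons s x.
  by move: h h'; rewrite e => h h'; move: h'; rewrite -h.
have [h1 h2] := kind_rcons s x; have [h3 h4] := kind_rcons t y.
have xy : x = y by rewrite -h1 -h3 e.
subst y; congr rcons; apply: IH.
by move: e; rewrite !Psi_rcons => /gcanr.
Qed.


Local Notation "x * y" := (gmul x y) : grp_scope.
Local Notation "x ^-1" := (ginv x) : grp_scope.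
Local Open Scope grp_scope.

Definition code (Gamma : finType) (a : Gamma) : seq bool := rcons (nseq (enum_rank a) true) false.

Lemma code_pref i j s t : nseq i true ++ false :: s = nseq j true ++ false :: t -> i = j /\ s = t.
Proof.
elim: i j => [|i IH] [|j] //=; first by case.
by case=> /IH [-> ->].
Qed.

Lemma flat_inj (Gamma : finType) (u v : seq Gamma) :
  flatten (map (@code Gamma) u) = flatten (map (@code Gamma) v) -> u = v.
Proof.
elim: u v => [|a u IH] [|b v] //=.
- by rewrite /code; case: (nat_of_ord (enum_rank b)) => [|?].
- by rewrite /code; case: (nat_of_ord (enum_rank a)) => [|?].
rewrite /code -!cats1 -!catA /= => /code_pref [h1 /IH ->].
by congr cons; apply: enum_rank_inj; apply: val_inj.
Qed.

Definition PhiG (Gamma : finType) (w : seq Gamma) : Hgrp := Psi (flatten (map (@code Gamma) w)).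
Lemma PhiG_cat (Gamma : finType) (u v : seq Gamma) : PhiG (u ++ v) = PhiG u * PhiG v.
Proof. by rewrite /PhiG map_cat flatten_cat Psi_cat. Qed.
Lemma PhiG_inj (Gamma : finType) (u v : seq Gamma) : PhiG u = PhiG v -> u = v.
Proof. by move/Psi_inj/flat_inj. Qed.

Lemma morph_cat (Sigma Gamma : Type) (h : Sigma -> seq Gamma) u v :
  morph h (u ++ v) = morph h u ++ morph h v.
Proof. by rewrite /morph map_cat flatten_cat. Qed.

Lemma eq_iff_ctx (G : grp) (gL fL z fR gR w : G) :
  (gL^-1 * fL) * z * (fR * gR^-1) = w -> fL * z * fR = gL * w * gR.
Proof. move=> <-; by gnorm. Qed.
Lemma eq_iff_ctx' (G : grp) (gL fL z fR gR w : G) :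
  fL * z * fR = gL * w * gR -> (gL^-1 * fL) * z * (fR * gR^-1) = w.
Proof.
move=> h; have -> : (gL^-1 * fL) * z * (fR * gR^-1) = gL^-1 * (fL * z * fR) * gR^-1 by gnorm.
rewrite h; by gnorm.
Qed.


Definition Fm (Sigma Gamma : finType) (f : Sigma -> seq Gamma) (u : seq Sigma) : Hgrp :=
  PhiG (morph f u).
Lemma Fm_cat (Sigma Gamma : finType) (f : Sigma -> seq Gamma) u v :
  Fm f (u ++ v) = Fm f u * Fm f v.
Proof. by rewrite /Fm morph_cat PhiG_cat. Qed.
Lemma Fm_iff (Sigma Gamma : finType) (f g : Sigma -> seq Gamma) u :
  morph f u = morph g u <-> Fm f u = Fm g u.
Proof. by split; [move=> h; rewrite /Fm h | move/PhiG_inj]. Qed.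

Lemma cube (Sigma Gamma : finType) (f g : Sigma -> seq Gamma)
  (l1 l2 l3 l4 r1 r2 r3 r4 : bool -> seq Sigma) (m : seq Sigma) :
  (forall c1 c2 c3 c4, ~~ [&& c1, c2, c3 & c4] ->
     morph f (l1 c1 ++ l2 c2 ++ l3 c3 ++ l4 c4 ++ m ++ r4 c4 ++ r3 c3 ++ r2 c2 ++ r1 c1)
   = morph g (l1 c1 ++ l2 c2 ++ l3 c3 ++ l4 c4 ++ m ++ r4 c4 ++ r3 c3 ++ r2 c2 ++ r1 c1)) ->
  morph f (l1 true ++ l2 true ++ l3 true ++ l4 true ++ m ++ r4 true ++ r3 true ++ r2 true ++ r1 true)
  = morph g (l1 true ++ l2 true ++ l3 true ++ l4 true ++ m ++ r4 true ++ r3 true ++ r2 true ++ r1 true).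
Proof.
move=> E.
have wE : forall c1 c2 c3 c4, l1 c1 ++ l2 c2 ++ l3 c3 ++ l4 c4 ++ m ++ r4 c4 ++ r3 c3 ++ r2 c2 ++ r1 c1
   = (l1 c1 ++ l2 c2) ++ (l3 c3 ++ l4 c4 ++ m ++ r4 c4 ++ r3 c3) ++ (r2 c2 ++ r1 c1).
  by move=> *; rewrite -!catA.
have key : forall c1 c2 c3 c4,
   morph f (l1 c1 ++ l2 c2 ++ l3 c3 ++ l4 c4 ++ m ++ r4 c4 ++ r3 c3 ++ r2 c2 ++ r1 c1)
   = morph g (l1 c1 ++ l2 c2 ++ l3 c3 ++ l4 c4 ++ m ++ r4 c4 ++ r3 c3 ++ r2 c2 ++ r1 c1)
   <-> ((Fm g (l1 c1 ++ l2 c2))^-1 * Fm f (l1 c1 ++ l2 c2)) * Fm f (l3 c3 ++ l4 c4 ++ m ++ r4 c4 ++ r3 c3)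
        * (Fm f (r2 c2 ++ r1 c1) * (Fm g (r2 c2 ++ r1 c1))^-1)
       = Fm g (l3 c3 ++ l4 c4 ++ m ++ r4 c4 ++ r3 c3).
  move=> c1 c2 c3 c4; rewrite Fm_iff wE.
  rewrite !Fm_cat; split => h.
    apply: eq_iff_ctx'; move: h; rewrite -?gmulA => h; rewrite -?gmulA; exact h.
  have := eq_iff_ctx h; rewrite -?gmulA => h'; rewrite -?gmulA; exact h'.
apply/key.
apply: (core (@Hct) (a := fun c1 c2 => (Fm g (l1 c1 ++ l2 c2))^-1 * Fm f (l1 c1 ++ l2 c2))
   (b := fun c1 c2 => Fm f (r2 c2 ++ r1 c1) * (Fm g (r2 c2 ++ r1 c1))^-1)
   (Z := fun c3 c4 => Fm f (l3 c3 ++ l4 c4 ++ m ++ r4 c4 ++ r3 c3))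
   (W := fun c3 c4 => Fm g (l3 c3 ++ l4 c4 ++ m ++ r4 c4 ++ r3 c3))).
- by move=> c1 c2 c3 c4 nc; apply/key; apply: E.
- rewrite !Fm_cat !ginvM => h.
  have h' : (Fm g (l1 false))^-1 * Fm f (l1 false) = (Fm g (l1 true))^-1 * Fm f (l1 true).
    move: h; rewrite -?gmulA => /gcanl; rewrite ?gmulA => /gcanr.
    by rewrite -?gmulA.
  by rewrite -?gmulA (gmulA _ (Fm f (l1 false))) h' !gmulA.
- rewrite !Fm_cat !ginvM => h.
  have h' : Fm f (r1 false) * (Fm g (r1 false))^-1 = Fm f (r1 true) * (Fm g (r1 true))^-1.
    move: h; rewrite -?gmulA => /gcanl; rewrite ?gmulA => /gcanr.
    by [].
  by rewrite -?gmulA (gmulA (Fm f (r1 false))) h' !gmulA.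
- rewrite !Fm_cat => h.
  have h' : Fm f (l4 false) * (Fm f m * (Fm f (r4 false))) = Fm f (l4 true) * (Fm f m * (Fm f (r4 true))).
    move: h; rewrite -?gmulA => /gcanl; rewrite ?gmulA => /gcanr.
    by rewrite -?gmulA.
  by rewrite (gmulA (Fm f m) (Fm f (r4 false))) (gmulA (Fm f (l4 false))) h' -?gmulA.
Qed.

Local Close Scope grp_scope.


Definition Lw (N Sigma : eqType) (p : seq (rule N Sigma)) := flatten (map (@lword _ _) p).
Definition Rw (N Sigma : eqType) (p : seq (rule N Sigma)) := flatten (rev (map (@rword _ _) p)).

Lemma path_wordE (N Sigma : eqType) (p : seq (rule N Sigma)) : path_word p = Lw p ++ Rw p.
Proof. by []. Qed.
Lemma Lw_cat (N Sigma : eqType) (p q : seq (rule N Sigma)) : Lw (p ++ q) = Lw p ++ Lw q.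
Proof. by rewrite /Lw map_cat flatten_cat. Qed.
Lemma Rw_cat (N Sigma : eqType) (p q : seq (rule N Sigma)) : Rw (p ++ q) = Rw q ++ Rw p.
Proof. by rewrite /Rw map_cat rev_cat flatten_cat. Qed.

Definition pend (N Sigma : eqType) (x : option N) (p : seq (rule N Sigma)) := last x (map (@tgt _ _) p).

Lemma is_path_cat (N Sigma : eqType) (rules : seq (rule N Sigma)) x p q y :
  is_path rules x (p ++ q) y = is_path rules x p (pend x p) && is_path rules (pend x p) q y.
Proof.
elim: p x => [|r p IH] x /=; first by rewrite eqxx.
by rewrite IH /pend /= !andbA.
Qed.

Lemma path_end (N Sigma : eqType) (rules : seq (rule N Sigma)) x p y :
  is_path rules x p y -> y = pend x p.
Proof.
elim: p x => [|r p IH] x /=; first by move/eqP.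
by case/and3P => _ _ /IH.
Qed.

Lemma is_path_catP (N Sigma : eqType) (rules : seq (rule N Sigma)) x p q y z :
  is_path rules x p z -> is_path rules z q y -> is_path rules x (p ++ q) y.
Proof.
move=> h1 h2; rewrite is_path_cat -(path_end h1) h1 h2 //.
Qed.

Lemma path_start (N Sigma : eqType) (rules : seq (rule N Sigma)) x r p y :
  is_path rules x (r :: p) y -> x = Some (lhs r).
Proof. by case/and3P => _ /eqP. Qed.

Lemma path_in (N Sigma : eqType) (rules : seq (rule N Sigma)) x p y :
  is_path rules x p y -> all (mem rules) p.
Proof.
elim: p x => [|r p IH] x //=.
by case/and3P => -> _ /IH.
Qed.

Lemma path_derives (N Sigma : eqType) (rules : seq (rule N Sigma)) A p :
  is_path rules (Some A) p None -> derives rules A (path_word p).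
Proof.
elim: p A => [|r p IH] A //=.
case/and3P => rin /eqP [eA]; case: r rin eA => B [[[u C] v]|u] /= rin eA; subst B.
  move=> /IH h.
  have -> : path_word ((A, inl (u, C, v)) :: p) = u ++ path_word p ++ v.
    by rewrite /path_word /= rev_cons -cats1 flatten_cat /= cats0 -!catA.
  exact: (der_nt rin h).
case: p {IH} => [_|r' p] /=; last by rewrite andbF.
have -> : path_word [:: (A, inr u)] = u by rewrite /path_word /= !cats0.
exact: der_term.
Qed.

Lemma derives_path (N Sigma : eqType) (rules : seq (rule N Sigma)) A w :
  derives rules A w -> exists p, is_path rules (Some A) p None /\ path_word p = w.
Proof.
elim=> {A w} [A u rin | A u B v w rin _ [p [hp <-]]].
  exists [:: (A, inr u)]; split; first by rewrite /= rin eqxx.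
  by rewrite /path_word /= !cats0.
exists ((A, inl (u, B, v)) :: p); split; first by rewrite /= rin eqxx.
by rewrite /path_word /= rev_cons -cats1 flatten_cat /= cats0 -!catA.
Qed.


Lemma lexlt_catl (c s t : seq nat) : lexlt (c ++ s) (c ++ t) = lexlt s t.
Proof. by elim: c => //= a c ->; rewrite ltnn eqxx. Qed.

Lemma lexlt_catr (s t u v : seq nat) : size s = size t -> lexlt s t -> lexlt (s ++ u) (t ++ v).
Proof.
elim: s t => [|a s IH] [|b t] //= [e] /orP [->//|/andP [ab h]].
by rewrite ab (IH _ e h) orbT.
Qed.

Lemma lexlt_total (s t : seq nat) : size s = size t -> s <> t -> lexlt s t \/ lexlt t s.
Proof.
elim: s t => [|a s IH] [|b t] //= [e] ne.
case: (ltngtP a b) => [ab|ba|ab]; [by left | by right |].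
subst b; have ne' : s <> t by move=> h; apply: ne; rewrite h.
by case: (IH _ e ne') => h; [left|right]; rewrite ?eqxx ?ltnn h ?orbT.
Qed.

Lemma lexlt_irr (s : seq nat) : lexlt s s = false.
Proof. by elim: s => //= a s ->; rewrite ltnn eqxx. Qed.

Section Order.
End Order.

Definition ple (N Sigma : eqType) (rules : seq (rule N Sigma)) p q := p = q \/ path_lt rules p q.

Lemma plt_size (N Sigma : eqType) (rules : seq (rule N Sigma)) p q :
  path_lt rules p q -> size p <= size q.
Proof. by case/orP => [/ltnW //|/andP [/eqP -> _]]. Qed.
Lemma ple_size (N Sigma : eqType) (rules : seq (rule N Sigma)) p q :
  ple rules p q -> size p <= size q.
Proof. by case=> [->//|/plt_size]. Qed.

Lemma plt_cat1 (N Sigma : eqType) (rules : seq (rule N Sigma)) s t s' t' :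
  path_lt rules s t -> ple rules s' t' -> path_lt rules (s ++ s') (t ++ t').
Proof.
move=> h1 h2; have hs := ple_size h2; rewrite /path_lt !size_cat.
case/orP: h1 => [lt1|/andP [/eqP e1 lx]].
  by rewrite (leq_trans (n := size t + size s')) ?leq_add2r ?ltn_add2r // leq_add2l.
rewrite e1 ltn_add2l eqn_add2l.
case: (ltngtP (size s') (size t')) hs => //= e2 _.
by rewrite !map_cat lexlt_catr ?size_map.
Qed.

Lemma plt_cat2 (N Sigma : eqType) (rules : seq (rule N Sigma)) s t s' t' :
  ple rules s t -> path_lt rules s' t' -> path_lt rules (s ++ s') (t ++ t').
Proof.
case=> [<-|h1] h2; last by apply: plt_cat1 => //; right.
rewrite /path_lt !size_cat ltn_add2l eqn_add2l !map_cat lexlt_catl.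
exact: h2.
Qed.

Lemma ple_cat (N Sigma : eqType) (rules : seq (rule N Sigma)) s t s' t' :
  ple rules s t -> ple rules s' t' -> ple rules (s ++ s') (t ++ t').
Proof.
case=> [<-|h1] h2; last by right; apply: plt_cat1.
case: h2 => [<-|h2]; [by left | by right; apply: plt_cat2 => //; left].
Qed.

Lemma plt_nil (N Sigma : eqType) (rules : seq (rule N Sigma)) q : path_lt rules q [::] = false.
Proof. by rewrite /path_lt ltn0 /=; case: q. Qed.

Fixpoint numl (B : nat) (s : seq nat) : nat :=
  if s is a :: s' then a * B ^ size s' + numl B s' else 0.

Lemma numl_lt B s : all (fun a => a < B) s -> numl B s < B ^ size s.
Proof.
elim: s => [|a s IH] /=; first by rewrite expn0.
case/andP => ha /IH h; rewrite expnS.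
apply: (@leq_trans ((a.+1) * B ^ size s)); first by rewrite mulSn addnC ltn_add2r.
by rewrite leq_mul2r ha orbT.
Qed.

Lemma lex_numl B s t : size s = size t -> all (fun a => a < B) s -> all (fun a => a < B) t ->
  lexlt s t -> numl B s < numl B t.
Proof.
elim: s t => [|a s IH] [|b t] //= [e] /andP [ha hs] /andP [hb ht] /orP [ab|/andP [/eqP <- h]].
  have := numl_lt hs; rewrite e => h.
  apply: (@leq_trans ((a.+1) * B ^ size t)); first by rewrite mulSn addnC ltn_add2r.
  by rewrite (leq_trans _ (leq_addr _ _)) // leq_mul2r ab orbT.
by rewrite e ltn_add2l IH.
Qed.

Definition Kp (N Sigma : eqType) (rules : seq (rule N Sigma)) (p : seq (rule N Sigma)) :=
  (size rules).+2 ^ size p + numl (size rules).+2 (map (index^~ rules) p).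

Lemma idx_lt (N Sigma : eqType) (rules : seq (rule N Sigma)) p :
  all (fun a => a < (size rules).+2) (map (index^~ rules) p).
Proof. by apply/allP => a /mapP [r _ ->]; rewrite ltnS (leq_trans (index_size _ _)). Qed.

Lemma plt_K (N Sigma : eqType) (rules : seq (rule N Sigma)) p q :
  path_lt rules q p -> Kp rules q < Kp rules p.
Proof.
rewrite /Kp; set B := (size rules).+2.
case/orP => [lt|/andP [/eqP e lx]].
  apply: (@leq_trans (B ^ (size q).+1)).
    rewrite expnS; have := numl_lt (idx_lt rules q); rewrite size_map -/B => h.
    apply: (@leq_trans (B ^ size q + B ^ size q)); first by rewrite ltn_add2l.
    by rewrite addnn -mul2n leq_mul2r /B ltnS orbT.
  by rewrite (leq_trans _ (leq_addr _ _)) // leq_exp2l // /B.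
rewrite e ltn_add2l; apply: lex_numl => //; last exact: idx_lt.
  by rewrite !size_map.
exact: idx_lt.
Qed.

Lemma plt_ind (N Sigma : eqType) (rules : seq (rule N Sigma)) (P : seq (rule N Sigma) -> Prop) :
  (forall p, (forall q, path_lt rules q p -> P q) -> P p) -> forall p, P p.
Proof.
move=> h p; move: {2}(Kp rules p) (leqnn (Kp rules p)) => n; elim: n p => [|n IH] p hp.
  apply: h => q /plt_K; by rewrite ltnNge (leq_trans hp).
apply: h => q /plt_K hq; apply: IH; rewrite -ltnS; exact: leq_trans hq hp.
Qed.


Lemma opt_nil (N Sigma : eqType) (rules : seq (rule N Sigma)) : optimal rules [::].
Proof. exists None, None; split => // q _; by rewrite plt_nil. Qed.

Lemma opt_min (N Sigma : eqType) (rules : seq (rule N Sigma)) x y p :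
  optimal rules p -> is_path rules x p y -> forall q, is_path rules x q y -> ~~ path_lt rules q p.
Proof.
case=> x' [y' [hp' hmin]] hp q hq.
case: p hp' hmin hp => [|r p] hp' hmin hp; first by rewrite plt_nil.
have ex : x = x' by rewrite (path_start hp) (path_start hp').
have ey : y = y' by rewrite (path_end hp) (path_end hp') ex.
by subst; apply: hmin.
Qed.

Lemma path_lt_total (N Sigma : eqType) (rules : seq (rule N Sigma)) p q :
  uniq rules -> all (mem rules) p -> all (mem rules) q -> p <> q ->
  path_lt rules p q \/ path_lt rules q p.
Proof.
move=> ur hp hq ne; rewrite /path_lt.
case: (ltngtP (size p) (size q)) => [|//|e]; [by left | by right |].
have ne' : map (index^~ rules) p <> map (index^~ rules) q.
  have inj : {in rules &, injective (index^~ rules)}.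
    by move=> a b ha hb /= e'; rewrite -(nth_index a ha) -(nth_index a hb) e'.
  move=> h; apply: ne; exact: (inj_in_map inj) h.
case: (lexlt_total _ ne'); rewrite ?size_map // => h; [left|right]; rewrite ?e ?eqxx ?ltnn h ?orbT //.
Qed.

Lemma opt_unique (N Sigma : eqType) (rules : seq (rule N Sigma)) x y p q :
  uniq rules -> optimal rules p -> optimal rules q -> is_path rules x p y -> is_path rules x q y -> p = q.
Proof.
move=> ur op oq hp hq; apply: NNPP => ne.
case: (path_lt_total ur (path_in hp) (path_in hq) ne) => h.
  by move: (opt_min oq hq hp); rewrite h.
by move: (opt_min op hp hq); rewrite h.
Qed.

Lemma scan (N Sigma : eqType) (rules : seq (rule N Sigma)) p :
  optimal rules p \/ exists P e Q, [/\ p = P ++ e :: Q, optimal rules P & ~ optimal rules (rcons P e)].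
Proof.
have : forall d i, i + d = size p -> optimal rules (take i p) -> optimal rules p \/
    exists P e Q, [/\ p = P ++ e :: Q, optimal rules P & ~ optimal rules (rcons P e)].
  elim=> [|d IH] i hi op.
    by left; move: op; rewrite addn0 in hi; rewrite hi take_size.
  case: (classic (optimal rules (take i.+1 p))) => h.
    by apply: (IH i.+1) => //; rewrite addSnnS.
  right; case hd: (drop i p) => [|e Q].
    by move: (size_drop i p); rewrite hd -hi addKn.
  exists (take i p), e, Q; split => //.
    by rewrite -hd cat_take_drop.
  have -> : rcons (take i p) e = take i.+1 p.
    have sz : size (take i p) = i by rewrite size_takel // -hi leq_addr.
    by rewrite -{2}(cat_take_drop i p) hd take_cat sz ltnNge leqnSn /= subSnn /= take0 cats1.
  done.
move=> /(_ (size p) 0 erefl); rewrite take0; apply; exact: opt_nil.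
Qed.


Fixpoint brk (N Sigma : eqType) (rules : seq (rule N Sigma)) (n : nat) (p : seq (rule N Sigma)) : Prop :=
  match n with
  | 0 => True
  | n'.+1 => exists X R, [/\ p = X ++ R, ~ optimal rules X & brk rules n' R]
  end.

Lemma dec_or_brk (N Sigma : eqType) (rules : seq (rule N Sigma)) k p :
  decomp rules k p \/ brk rules k.+1 p.
Proof.
elim: k p => [|k IH] p; (case: (scan rules p) => [op|[P [e [Q [-> oP noP]]]]]; first by left; constructor).
  by right; exists (rcons P e), Q; split => //; rewrite cat_rcons.
case: (IH Q) => h; first by left; constructor.
by right; exists (rcons P e), Q; split => //; rewrite cat_rcons.
Qed.

Lemma alt (N Sigma : eqType) (rules : seq (rule N Sigma)) x X y :
  ~ optimal rules X -> is_path rules x X y -> exists O, is_path rules x O y /\ path_lt rules O X.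
Proof.
move=> no hX; apply: NNPP => h; apply: no; exists x, y; split => // q hq.
apply/negP => hl; apply: h; by exists q.
Qed.

Lemma plt4 (N Sigma : eqType) (rules : seq (rule N Sigma)) (a1 a2 a3 a4 b1 b2 b3 b4 r : seq (rule N Sigma))
  (c1 c2 c3 c4 : bool) :
  (if c1 then a1 = b1 else path_lt rules a1 b1) ->
  (if c2 then a2 = b2 else path_lt rules a2 b2) ->
  (if c3 then a3 = b3 else path_lt rules a3 b3) ->
  (if c4 then a4 = b4 else path_lt rules a4 b4) ->
  ~~ [&& c1, c2, c3 & c4] ->
  path_lt rules (a1 ++ a2 ++ a3 ++ a4 ++ r) (b1 ++ b2 ++ b3 ++ b4 ++ r).
Proof.
have le : forall (c : bool) a b, (if c then a = b else path_lt rules a b) -> ple rules a b.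
  by case=> a b h; [left|right].
move=> h1 h2 h3 h4 nc.
have l1 := le _ _ _ h1; have l2 := le _ _ _ h2; have l3 := le _ _ _ h3; have l4 := le _ _ _ h4.
have lr : ple rules r r by left.
case: c1 h1 nc => h1 /= nc; last by apply: plt_cat1 => //; do 3 apply: ple_cat => //.
apply: plt_cat2 => //.
case: c2 h2 nc => h2 /= nc; last by apply: plt_cat1 => //; do 2 apply: ple_cat => //.
apply: plt_cat2 => //.
case: c3 h3 nc => h3 /= nc; last by apply: plt_cat1 => //; apply: ple_cat => //.
apply: plt_cat2 => //.
case: c4 h4 nc => h4 //= _.
by apply: plt_cat1.
Qed.

Lemma agree (N Sigma Gamma : finType) (rules : seq (rule N Sigma)) (S : N) (f g : Sigma -> seq Gamma) :
  (forall w, Phi rules S 3 w -> morph f w = morph g w) ->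
  forall p, is_path rules (Some S) p None -> morph f (path_word p) = morph g (path_word p).
Proof.
move=> H; apply: (plt_ind (rules := rules)) => p IH hp.
case: (dec_or_brk rules 3 p) => [d|].
  by apply: H; exists p.
move=> [X1 [R1 [e1 n1 [X2 [R2 [e2 n2 [X3 [R3 [e3 n3 [X4 [R4 [e4 n4 _]]]]]]]]]]]].
subst p R1 R2 R3.
move: hp; rewrite !is_path_cat => /andP [p1 /andP [p2 /andP [p3 /andP [p4 pr]]]].
have [O1 [q1 lt1]] := alt n1 p1.
have [O2 [q2 lt2]] := alt n2 p2.
have [O3 [q3 lt3]] := alt n3 p3.
have [O4 [q4 lt4]] := alt n4 p4.
set v2 := pend (Some S) X1 in p1 p2 q1 q2.
set v3 := pend v2 X2 in p2 p3 q2 q3.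
set v4 := pend v3 X3 in p3 p4 q3 q4.
set v5 := pend v4 X4 in p4 pr q4.
pose s1 (c : bool) := if c then X1 else O1.
pose s2 (c : bool) := if c then X2 else O2.
pose s3 (c : bool) := if c then X3 else O3.
pose s4 (c : bool) := if c then X4 else O4.
have wE : forall c1 c2 c3 c4, path_word (s1 c1 ++ s2 c2 ++ s3 c3 ++ s4 c4 ++ R4) =
   Lw (s1 c1) ++ Lw (s2 c2) ++ Lw (s3 c3) ++ Lw (s4 c4) ++ path_word R4 ++
   Rw (s4 c4) ++ Rw (s3 c3) ++ Rw (s2 c2) ++ Rw (s1 c1).
  by move=> *; rewrite !path_wordE !Lw_cat !Rw_cat -!catA.
have := @cube Sigma Gamma f g (fun c => Lw (s1 c)) (fun c => Lw (s2 c)) (fun c => Lw (s3 c))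
  (fun c => Lw (s4 c)) (fun c => Rw (s1 c)) (fun c => Rw (s2 c)) (fun c => Rw (s3 c))
  (fun c => Rw (s4 c)) (path_word R4).
rewrite -wE /=; apply => c1 c2 c3 c4 nc; rewrite -wE.
apply: IH.
  apply: plt4 nc; rewrite /s1 /s2 /s3 /s4; [case: c1|case: c2|case: c3|case: c4] => //.
apply: (is_path_catP (z := v2)); first by case: (c1).
apply: (is_path_catP (z := v3)); first by case: (c2).
apply: (is_path_catP (z := v4)); first by case: (c3).
apply: (is_path_catP (z := v5)); first by case: (c4).
exact: pr.
Qed.


Inductive decompE (N Sigma : eqType) (rules : seq (rule N Sigma)) :
  option N -> seq (rule N Sigma) -> seq (rule N Sigma) -> Prop :=
| dE_last x P : optimal rules P -> is_path rules x P None -> decompE rules x P [::]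
| dE_cons x P e Q es : optimal rules P -> is_path rules x P (Some (lhs e)) -> e \in rules ->
    decompE rules (tgt e) Q es -> decompE rules x (P ++ e :: Q) (e :: es).

Lemma decomp_E (N Sigma : eqType) (rules : seq (rule N Sigma)) k p :
  decomp rules k p -> forall x, is_path rules x p None ->
  exists es, size es <= k /\ decompE rules x p es.
Proof.
elim=> {k p} [n P oP | n P e Q oP _ dQ IH] x hp.
  by exists [::]; split => //; constructor.
move: hp; rewrite is_path_cat => /andP [h1 /= /and3P [ein /eqP ez h2]].
have [es [hs hd]] := IH _ h2.
exists (e :: es); split => //; apply: dE_cons => //.
by rewrite -ez.
Qed.

Lemma decompE_in (N Sigma : eqType) (rules : seq (rule N Sigma)) x p es :
  decompE rules x p es -> all (mem rules) es.
Proof. by elim=> //= x0 P e Q es0 _ _ ein _ IH; rewrite ein IH. Qed.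

Lemma decompE_uniq (N Sigma : eqType) (rules : seq (rule N Sigma)) x p es :
  uniq rules -> decompE rules x p es -> forall p', decompE rules x p' es -> p = p'.
Proof.
move=> ur; elim=> [x0 P oP hP | x0 P e Q es0 oP hP ein dQ IH] p' h'.
  inversion h'; subst; by eapply opt_unique; eauto.
inversion h'; subst.
have eP : P = P0 by eapply opt_unique; eauto.
by subst; rewrite (IH Q0).
Qed.

Fixpoint seqs (T : Type) (R : seq T) (n : nat) : seq (seq T) :=
  if n is n'.+1 then [seq r :: s | r <- R, s <- seqs R n'] else [:: [::]].
Fixpoint allk (T : Type) (R : seq T) (k : nat) : seq (seq T) :=
  if k is k'.+1 then allk R k' ++ seqs R k else seqs R 0.

Lemma size_seqs (T : Type) (R : seq T) n : size (seqs R n) = size R ^ n.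
Proof. by elim: n => //= n IH; rewrite size_allpairs IH expnS. Qed.
Lemma size_allk (T : Type) (R : seq T) k : size (allk R k) = \sum_(i < k.+1) size R ^ i.
Proof.
elim: k => [|k IH]; first by rewrite big_ord_recr big_ord0.
have -> : allk R k.+1 = allk R k ++ seqs R k.+1 by [].
by rewrite size_cat IH size_seqs [in RHS]big_ord_recr.
Qed.
Lemma mem_seqs (T : eqType) (R : seq T) es : all (mem R) es -> es \in seqs R (size es).
Proof.
elim: es => [|e es IH] //= /andP [h1 /IH h2].
by apply: (allpairs_f (fun r s => r :: s)).
Qed.
Lemma mem_allk (T : eqType) (R : seq T) k es : all (mem R) es -> size es <= k -> es \in allk R k.
Proof.
move=> h; elim: k => [|k IH]; first by rewrite leqn0 => /eqP e; move: (mem_seqs h); rewrite e.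
rewrite leq_eqVlt => /orP [/eqP e|/IH hk]; rewrite (_ : allk R k.+1 = allk R k ++ seqs R k.+1) // mem_cat; last by rewrite hk.
by rewrite -e mem_seqs ?orbT.
Qed.

Lemma collect (T U : eqType) (R : T -> U -> Prop) (L : seq T) :
  (forall a w w', R a w -> R a w' -> w = w') ->
  exists ws : seq U, size ws <= size L /\ forall a w, a \in L -> R a w -> w \in ws.
Proof.
move=> fn; elim: L => [|a L [ws [hs hw]]]; first by exists [::].
case: (classic (exists w, R a w)) => [[w0 h0]|nw].
  exists (w0 :: ws); split; first by rewrite /= ltnS.
  move=> b w; rewrite inE => /orP [/eqP -> hb|hb hR]; first by rewrite (fn _ _ _ hb h0) mem_head.
  by rewrite inE (hw _ _ hb hR) orbT.
exists ws; split; first exact: leqW.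
move=> b w; rewrite inE => /orP [/eqP -> hb|hb hR]; last exact: hw hR.
by exfalso; apply: nw; exists w.
Qed.

Theorem mainTheorem2 (N Sigma : finType) (rules : seq (rule N Sigma)) (S : N) :
  uniq rules ->
  test_set (lang rules S) (Phi rules S 3) /\
  forall k : nat, exists ws : seq (seq Sigma),
    size ws <= \sum_(i < k.+1) (size rules) ^ i /\
    forall w, Phi rules S k w -> w \in ws.
Proof.
move=> ur; split.
  split.
    by move=> w [p [hp _ <-]]; apply: path_derives.
  move=> Gamma f g H w /derives_path [p [hp <-]].
  exact: agree H p hp.
move=> k.
have [ws [hs hw]] := @collect _ _ (fun es w => exists p, decompE rules (Some S) p es /\ path_word p = w)
   (allk rules k) (fun es w w' '(ex_intro p (conj h1 e1)) '(ex_intro p' (conj h2 e2)) =>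
       eq_ind _ (fun z => z = w') (eq_ind _ (fun z => path_word p = z) (f_equal (@path_word _ _) (decompE_uniq ur h1 h2)) _ e2) _ e1).
exists ws; split; first by rewrite -size_allk.
move=> w [p [hp dp <-]].
have [es [hes he]] := decomp_E dp hp.
apply: (hw es); last by exists p.
exact: mem_allk (decompE_in he) hes.
Qed.
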